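(* Fix $n\ge 1$. Let $\mathsf{X}$ and $\mathsf{Y}$ be intermediate temporal logics with $\mathrm{ITL}^{\mathrm{BD}_n}\subseteq \mathsf{X}\subseteq \mathrm{THT}$ and $\mathrm{ITL}^{\mathrm{BD}_n}\subseteq \mathsf{Y}\subseteq \mathrm{THT}$. Then for every temporal theory $\Gamma$, the $\mathsf{X}$-temporal safe belief sets of $\Gamma$ coincide with the $\mathsf{Y}$-temporal safe belief sets of $\Gamma$; i.e. for every $T\subseteq \mathbb{P}^{\circ}$, $T$ is an $\mathsf{X}$-temporal safe belief set of $\Gamma$ iff $T$ is a $\mathsf{Y}$-temporal safe belief set of $\Gamma$.
   Context: Fix a countable set $\mathbb{P}$ of atoms. Temporal formulas: $\varphi ::= p\in\mathbb{P}\mid \bot\mid \varphi\wedge\varphi\mid\varphi\vee\varphi\mid\varphi\to\varphi\mid \circ\varphi\mid \varphi\,\mathsf{U}\,\varphi\mid\varphi\,\mathsf{R}\,\varphi$; $\neg\varphi:=\varphi\to\bot$, $\Box\varphi:=\bot\,\mathsf{R}\,\varphi$, $\circ^0\varphi:=\varphi$, $\circ^{i+1}\varphi:=\circ\circ^i\varphi$. A temporal theory is a set of temporal formulas. An intuitionistic temporal frame is $(W,\preccurlyeq,S)$ with $W\neq\emptyset$, $\preccurlyeq$ a partial order on $W$, and $S:W\to W$ a function with forward confluence ($w\preccurlyeq v\Rightarrow S(w)\preccurlyeq S(v)$); it is persistent if also backward confluent (if $S(w)=v$ and $v\preccurlyeq u$ then there is $t$ with $w\preccurlyeq t$ and $S(t)=u$).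 A model adds a valuation $V:W\to 2^{\mathbb{P}}$ with $w\preccurlyeq v\Rightarrow V(w)\subseteq V(v)$. Satisfaction: $M,w\models p$ iff $p\in V(w)$; $\bot$ never holds; $\wedge,\vee$ pointwise; $M,w\models\varphi\to\psi$ iff for all $v$ with $w\preccurlyeq v$, $M,v\models\varphi$ implies $M,v\models\psi$; $M,w\models\circ\varphi$ iff $M,S(w)\models\varphi$; $M,w\models\varphi\,\mathsf{U}\,\psi$ iff there is $k\ge0$ with $M,S^k(w)\models\psi$ and $M,S^i(w)\models\varphi$ for all $0\le i<k$; $M,w\models\varphi\,\mathsf{R}\,\psi$ iff for all $k\ge 0$, $M,S^k(w)\models\psi$ or $M,S^i(w)\models\varphi$ for some $0\le i<k$. A frame has depth $\le n$ if $(W,\preccurlyeq)$ has no chain of $n+1$ pairwise distinct worlds. $\mathrm{ITL}^{\mathrm{BD}_n}$ is the set of formulas true at every world of every model on a persistent frame of depth $\le n$; $\mathrm{LTL}$ is the case $n=1$. An intermediate temporal logic is a set $\mathsf{X}$ of formulas with $\mathrm{ITL}^{\mathrm{BD}_n}\subseteq\mathsf{X}\subseteq\mathrm{LTL}$ for some $n\ge1$, closed under modus ponens, necessitation ($\psi\in\mathsf{X}\Rightarrow \circ\psi,\Box\psi\in\mathsf{X}$) and uniform substitution of formulas for atoms. $\mathsf{X}$-models are models on persistent frames of depth $\le n$ validating every formula of $\mathsf{X}$, except that $\mathrm{THT}$-models are exactly the models on the THT frame: $W=\mathbb{N}\times\{0,1\}$, $(i,h)\preccurlyeq(j,t)$ iff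 $i=j$ and $h\le t$, $S((i,k))=(i+1,k)$; $\mathrm{THT}$ is the set of formulas true at every world of every such model. $\Gamma$ is $\mathsf{X}$-consistent if some $\mathsf{X}$-model $M$ and world $w$ satisfy $M,w\models\gamma$ for all $\gamma\in\Gamma$. $\Gamma\models_{\mathsf{X}}\Delta$ means: for every $\mathsf{X}$-model $M$ and world $w$, if $M,w$ satisfies all of $\Gamma$ then it satisfies every formula of $\Delta$. Let $\mathbb{P}^{\circ}:=\{\circ^ip\mid p\in\mathbb{P},i\ge0\}$. For a logic $\mathsf{X}$, $T\subseteq\mathbb{P}^{\circ}$ is an $\mathsf{X}$-temporal safe belief set of $\Gamma$ if, with $\Sigma_T:=\Gamma\cup\{\circ^i\neg\neg p\mid\circ^ip\in T\}\cup\{\circ^i\neg p\mid \circ^ip\notin T\}$, (1) $\Sigma_T$ is $\mathsf{X}$-consistent and (2) $\Sigma_T\models_{\mathsf{X}}T$. *)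

(* Defs.v *)
From Stdlib Require Import Arith.

Inductive form : Type :=
| Atom (p : nat)
| Bot
| And (a b : form)
| Or (a b : form)
| Imp (a b : form)
| Next (a : form)
| Until (a b : form)
| Release (a b : form).

Definition neg (a : form) : form := Imp a Bot.
Definition box (a : form) : form := Release Bot a.
Fixpoint nexti (i : nat) (a : form) : form :=
  match i with 0 => a | S i' => Next (nexti i' a) end.

Fixpoint subst (s : nat -> form) (a : form) : form :=
  match a with
  | Atom p => s p
  | Bot => Bot
  | And a b => And (subst s a) (subst s b)
  | Or a b => Or (subst s a) (subst s b)
  | Imp a b => Imp (subst s a) (subst s b)
  | Next a => Next (subst s a)
  | Until a b => Until (subst s a) (subst s b)
  | Release a b => Release (subst s a) (subst s b)
  end.

Record model : Type := Model {
  W : Type;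
  le : W -> W -> Prop;
  succ : W -> W;
  val : W -> nat -> Prop
}.

Fixpoint iter {A : Type} (k : nat) (f : A -> A) (x : A) : A :=
  match k with 0 => x | S k' => f (iter k' f x) end.

Fixpoint sat (M : model) (w : W M) (a : form) {struct a} : Prop :=
  match a with
  | Atom p => val M w p
  | Bot => False
  | And a b => sat M w a /\ sat M w b
  | Or a b => sat M w a \/ sat M w b
  | Imp a b => forall v, le M w v -> sat M v a -> sat M v b
  | Next a => sat M (succ M w) a
  | Until a b => exists k, sat M (iter k (succ M) w) b /\
                   forall i, i < k -> sat M (iter i (succ M) w) a
  | Release a b => forall k, sat M (iter k (succ M) w) b \/
                   exists i, i < k /\ sat M (iter i (succ M) w) a
  end.

Definition persistent_model (M : model) : Prop :=
  (forall w, le M w w) /\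
  (forall u v w, le M u v -> le M v w -> le M u w) /\
  (forall u v, le M u v -> le M v u -> u = v) /\
  (forall w v, le M w v -> le M (succ M w) (succ M v)) /\
  (forall w u, le M (succ M w) u -> exists t, le M w t /\ succ M t = u) /\
  (forall w v p, le M w v -> val M w p -> val M v p).

(* depth <= n: no chain of n+1 pairwise distinct worlds
   (a chain enumerated in increasing order f 0 < f 1 < ... < f n). *)
Definition depth_le (M : model) (n : nat) : Prop :=
  ~ exists f : nat -> W M,
      forall i j, i < j -> j <= n -> le M (f i) (f j) /\ f i <> f j.

Definition ITL_BD (n : nat) (a : form) : Prop :=
  forall M : model, persistent_model M -> depth_le M n -> forall w, sat M w a.

Definition LTL (a : form) : Prop := ITL_BD 1 a.

Definition tht_le (x y : nat * bool) : Prop :=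
  fst x = fst y /\ Nat.leb (Nat.b2n (snd x)) (Nat.b2n (snd y)) = true.
Definition tht_succ (x : nat * bool) : nat * bool := (S (fst x), snd x).

Definition tht_val (V : nat * bool -> nat -> Prop) : Prop :=
  forall w v p, tht_le w v -> V w p -> V v p.

Definition THTM (V : nat * bool -> nat -> Prop) : model :=
  Model (nat * bool) tht_le tht_succ V.

Definition is_THT_model (M : model) : Prop :=
  exists V, tht_val V /\ M = THTM V.

Definition THT (a : form) : Prop :=
  forall V, tht_val V -> forall w, sat (THTM V) w a.

Definition incl (X Y : form -> Prop) : Prop := forall a, X a -> Y a.

Definition intermediate_logic (X : form -> Prop) : Prop :=
  (exists m, 1 <= m /\ incl (ITL_BD m) X) /\
  incl X LTL /\
  (forall a b, X a -> X (Imp a b) -> X b) /\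
  (forall a, X a -> X (Next a) /\ X (box a)) /\
  (forall s a, X a -> X (subst s a)).

Definition is_THT_logic (X : form -> Prop) : Prop := forall a, X a <-> THT a.

Definition Xmodel (n : nat) (X : form -> Prop) (M : model) : Prop :=
  (is_THT_logic X -> is_THT_model M) /\
  (~ is_THT_logic X ->
     persistent_model M /\ depth_le M n /\ forall a, X a -> forall w, sat M w a).

Definition consistent (n : nat) (X : form -> Prop) (G : form -> Prop) : Prop :=
  exists M, Xmodel n X M /\ exists w : W M, forall g, G g -> sat M w g.

Definition entails (n : nat) (X : form -> Prop) (G D : form -> Prop) : Prop :=
  forall M, Xmodel n X M -> forall w : W M,
    (forall g, G g -> sat M w g) -> forall d, D d -> sat M w d.

Definition Pcirc (a : form) : Prop := exists i p, a = nexti i (Atom p).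

Definition SigmaT (G T : form -> Prop) (a : form) : Prop :=
  G a \/
  (exists i p, T (nexti i (Atom p)) /\ a = nexti i (neg (neg (Atom p)))) \/
  (exists i p, ~ T (nexti i (Atom p)) /\ a = nexti i (neg (Atom p))).

Definition temporal_safe_belief_set (n : nat) (X : form -> Prop)
  (G T : form -> Prop) : Prop :=
  incl T Pcirc /\ consistent n X (SigmaT G T) /\ entails n X (SigmaT G T) T.

(* Main.v *)
Require Import Defs.
From Stdlib Require Import Setoid Classical Lia Arith.

Lemma iter_shift {A} (f:A->A) i x : iter i f (f x) = f (iter i f x).
Proof. induction i; simpl; congruence. Qed.

Lemma iter_add {A} (f:A->A) i j x : iter i f (iter j f x) = iter (i + j) f x.
Proof. induction i; simpl; congruence. Qed.

Lemma sat_nexti M i a w : sat M w (nexti i a) <-> sat M (iter i (succ M) w) a.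
Proof. revert w; induction i; intro w; simpl. tauto. rewrite IHi, iter_shift. tauto. Qed.

Lemma fwd_iter M (HM: persistent_model M) j x y :
  le M x y -> le M (iter j (succ M) x) (iter j (succ M) y).
Proof. destruct HM as (_&_&_&Hf&_). intro H; induction j; simpl; auto. Qed.

Lemma bwd_iter M (HM: persistent_model M) j x u :
  le M (iter j (succ M) x) u -> exists t, le M x t /\ iter j (succ M) t = u.
Proof.
  destruct HM as (_&_&_&_&Hb&_). revert u; induction j; intros u H; simpl in *.
  - exists u; auto.
  - destruct (Hb _ _ H) as [t1 [H1 H2]]. destruct (IHj _ H1) as [t [H3 H4]].
    exists t; split; auto; rewrite H4; auto.
Qed.

Lemma sat_mono M (HM: persistent_model M) a :
  forall w v, le M w v -> sat M w a -> sat M v a.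
Proof.
  pose proof HM as HM'. destruct HM' as (Hr&Ht&Ha&Hf&Hb&Hv).
  induction a; intros w v Hwv H; simpl in *.
  - eauto.
  - exact H.
  - destruct H; split; eauto.
  - destruct H; [left|right]; eauto.
  - intros u Hu. apply H. eauto.
  - eauto.
  - destruct H as [k [H1 H2]]. exists k. split.
    + apply (IHa2 (iter k (succ M) w)); [apply fwd_iter; auto | exact H1].
    + intros i Hi. apply (IHa1 (iter i (succ M) w)); [apply fwd_iter; auto | auto].
  - intros k. destruct (H k) as [H1 | [i [Hi H1]]].
    + left. apply (IHa2 (iter k (succ M) w)); [apply fwd_iter; auto | exact H1].
    + right. exists i. split; auto.
      apply (IHa1 (iter i (succ M) w)); [apply fwd_iter; auto | exact H1].
Qed.

Lemma bisim (M1 M2 : model) (Z : W M1 -> W M2 -> Prop)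
 (Hat : forall a b p, Z a b -> (val M1 a p <-> val M2 b p))
 (Hs : forall a b, Z a b -> Z (succ M1 a) (succ M2 b))
 (Hfo : forall a b a', Z a b -> le M1 a a' -> exists b', le M2 b b' /\ Z a' b')
 (Hba : forall a b b', Z a b -> le M2 b b' -> exists a', le M1 a a' /\ Z a' b') :
 forall phi a b, Z a b -> (sat M1 a phi <-> sat M2 b phi).
Proof.
  assert (Hit: forall k a b, Z a b -> Z (iter k (succ M1) a) (iter k (succ M2) b)).
  { induction k; simpl; auto. }
  induction phi; intros a b HZ; simpl.
  - apply Hat; auto.
  - tauto.
  - rewrite (IHphi1 a b HZ), (IHphi2 a b HZ). tauto.
  - rewrite (IHphi1 a b HZ), (IHphi2 a b HZ). tauto.
  - split.
    + intros H b' Hb' H1. destruct (Hba _ _ _ HZ Hb') as [a' [Ha' HZ']].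
      apply (IHphi2 _ _ HZ'). apply H; auto. apply (IHphi1 _ _ HZ'); auto.
    + intros H a' Ha' H1. destruct (Hfo _ _ _ HZ Ha') as [b' [Hb' HZ']].
      apply (IHphi2 _ _ HZ'). apply H; auto. apply (IHphi1 _ _ HZ'); auto.
  - apply IHphi; auto.
  - split; intros [k [H1 H2]]; exists k; split.
    + apply (IHphi2 _ _ (Hit k _ _ HZ)); auto.
    + intros i Hi; apply (IHphi1 _ _ (Hit i _ _ HZ)); auto.
    + apply (IHphi2 _ _ (Hit k _ _ HZ)); auto.
    + intros i Hi; apply (IHphi1 _ _ (Hit i _ _ HZ)); auto.
  - split; intros H k; destruct (H k) as [H1 | [i [Hi H1]]].
    + left; apply (IHphi2 _ _ (Hit k _ _ HZ)); auto.
    + right; exists i; split; auto; apply (IHphi1 _ _ (Hit i _ _ HZ)); auto.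
    + left; apply (IHphi2 _ _ (Hit k _ _ HZ)); auto.
    + right; exists i; split; auto; apply (IHphi1 _ _ (Hit i _ _ HZ)); auto.
Qed.

Lemma tht_pers V : tht_val V -> persistent_model (THTM V).
Proof.
  intro HV. unfold persistent_model, THTM, tht_le, tht_succ; simpl.
  split. { intros [a b]. split; [reflexivity| destruct b; reflexivity]. }
  split. { intros [a1 b1] [a2 b2] [a3 b3] [H1 H2] [H3 H4]; simpl in *. split; [congruence|].
           destruct b1,b2,b3; simpl in *; congruence. }
  split. { intros [a1 b1] [a2 b2] [H1 H2] [H3 H4]; simpl in *. subst.
           destruct b1,b2; simpl in *; congruence. }
  split. { intros [a1 b1] [a2 b2] [H1 H2]; simpl in *. split; simpl; [congruence|exact H2]. }
  split. { intros [a1 b1] [a2 b2] [H1 H2]; simpl in *. exists (a1, b2). split.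
           split; simpl; auto. f_equal; auto. }
  exact HV.
Qed.

Lemma tht_depth V n : 2 <= n -> depth_le (THTM V) n.
Proof.
  intros Hn [f Hf]. simpl in Hf.
  destruct (Hf 0 1 ltac:(lia) ltac:(lia)) as [[A1 B1] C1].
  destruct (Hf 1 2 ltac:(lia) ltac:(lia)) as [[A2 B2] C2].
  revert A1 B1 C1 A2 B2 C2.
  destruct (f 0) as [a0 b0], (f 1) as [a1 b1], (f 2) as [a2 b2]; simpl.
  intros A1 B1 C1 A2 B2 C2.
  destruct b0,b1,b2; simpl in *; try discriminate;
  solve [apply C1; f_equal; congruence | apply C2; f_equal; congruence].
Qed.

Lemma not_BD1_THT : ~ incl (ITL_BD 1) THT.
Proof.
  intro H.
  assert (HB : ITL_BD 1 (Or (Atom 0) (neg (Atom 0)))).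
  { intros M HM HD w. simpl. destruct (classic (val M w 0)) as [h|h]; [left; exact h| right].
    intros v Hv Hp. apply h. assert (v = w) as E.
    { apply NNPP; intro Hne. apply HD. exists (fun i => match i with 0 => w | _ => v end).
      intros i j Hij Hj. destruct i, j; try lia. split; auto. }
    subst; auto. }
  assert (HV : tht_val (fun x (p:nat) => snd x = true)).
  { intros [a b] [c d] p [H1 H2] H3; simpl in *; subst; destruct d; simpl in *; auto. }
  specialize (H _ HB _ HV (0,false)). simpl in H. destruct H as [H|H].
  - discriminate.
  - apply (H (0,true)); [split; reflexivity | reflexivity].
Qed.

Lemma tht_Xmodel n X V : 2<=n -> incl X THT -> tht_val V -> Xmodel n X (THTM V).
Proof.
  intros Hn HX HV. split.
  - intros _. exists V; auto.
  - intros _. split; [apply tht_pers; auto| split; [apply tht_depth; auto|]].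
    intros a Ha w. apply (HX a Ha V HV).
Qed.

Lemma Xmodel_pd n X M : 2<=n -> Xmodel n X M -> persistent_model M /\ depth_le M n.
Proof.
  intros Hn [H1 H2]. destruct (classic (is_THT_logic X)) as [h|h].
  - destruct (H1 h) as [V [HV E]]. subst M. split; [apply tht_pers|apply tht_depth]; auto.
  - destruct (H2 h) as [A [B _]]; auto.
Qed.

Definition Sig M G T (w : W M) := forall g, SigmaT G T g -> sat M w g.
Definition full M (T : form -> Prop) (x : W M) :=
  forall i p, T (nexti i (Atom p)) -> val M (iter i (succ M) x) p.
Definition maximal M (x : W M) := forall t, le M x t -> t = x.
Definition chain M (f : nat -> W M) k :=
  forall i j, i < j -> j <= k -> le M (f i) (f j) /\ f i <> f j.

Lemma Sig_mono M G T (HM: persistent_model M) w x : le M w x -> Sig M G T w -> Sig M G T x.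
Proof. intros H S g Hg. apply (sat_mono M HM g w x H (S g Hg)). Qed.

Lemma Sig_neg M G T w j p : Sig M G T w -> ~ T (nexti j (Atom p)) ->
  forall v, le M (iter j (succ M) w) v -> ~ val M v p.
Proof.
  intros S Hn v Hv Hp. assert (H := S (nexti j (neg (Atom p)))).
  assert (Hs : SigmaT G T (nexti j (neg (Atom p)))).
  { right; right; exists j, p; split; auto. }
  specialize (H Hs). apply sat_nexti in H. simpl in H. exact (H v Hv Hp).
Qed.

Lemma Sig_negneg M G T w j p : Sig M G T w -> T (nexti j (Atom p)) ->
  forall v, le M (iter j (succ M) w) v -> ~~ exists u, le M v u /\ val M u p.
Proof.
  intros S HT v Hv contra. assert (H := S (nexti j (neg (neg (Atom p))))).
  assert (Hs : SigmaT G T (nexti j (neg (neg (Atom p))))).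
  { right; left; exists j, p; split; auto. }
  specialize (H Hs). apply sat_nexti in H. simpl in H.
  apply (H v Hv). intros v' Hv' Hp. apply contra; exists v'; auto.
Qed.

Lemma Sig_ub M G T (HM : persistent_model M) w x : Sig M G T w -> le M w x ->
  forall j y p, le M (iter j (succ M) x) y -> val M y p -> T (nexti j (Atom p)).
Proof.
  intros S Hwx j y p Hy Hp. apply NNPP; intro Hn.
  apply (Sig_neg M G T w j p S Hn y); auto.
  pose proof HM as (_&Ht&_). apply (Ht _ (iter j (succ M) x)); [apply fwd_iter; auto | exact Hy].
Qed.

Lemma max_iter M (HM : persistent_model M) x : maximal M x -> forall j, maximal M (iter j (succ M) x).
Proof.
  intros Hm j t Ht. destruct (bwd_iter M HM j x t Ht) as [t' [H1 H2]].
  rewrite (Hm _ H1) in H2. symmetry; auto.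
Qed.

Lemma max_full M G T (HM : persistent_model M) w x : Sig M G T w -> le M w x -> maximal M x -> full M T x.
Proof.
  intros S Hx Hm i p HT. apply NNPP; intro Hn.
  apply (Sig_negneg M G T w i p S HT (iter i (succ M) x)).
  - apply fwd_iter; auto.
  - intros [u [Hu Hp]]. rewrite (max_iter M HM x Hm i u Hu) in Hp. auto.
Qed.

Lemma chain_prepend M (HM : persistent_model M) x t f k : le M x t -> t <> x -> f 0 = t ->
  chain M f k -> chain M (fun i => match i with 0 => x | S i' => f i' end) (S k).
Proof.
  intros Hxt Hne Hf0 Hc i j Hij Hj. destruct HM as (Hr&Ht&Ha&_).
  destruct j as [|j]; [lia|]. destruct i as [|i].
  - assert (Htj : le M t (f j)).
    { destruct j as [|j']. rewrite Hf0; apply Hr. rewrite <- Hf0.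
      apply (proj1 (Hc 0 (S j') ltac:(lia) ltac:(lia))). }
    split. eapply Ht; eauto. intro E. apply Hne. apply Ha; [rewrite E; exact Htj | exact Hxt].
  - apply Hc; lia.
Qed.

Lemma exists_max M (HM : persistent_model M) : forall k x,
  ~ (exists f, f 0 = x /\ chain M f k) -> exists m, le M x m /\ maximal M m.
Proof.
  pose proof HM as (Hr&Ht&_).
  induction k; intros x Hx.
  - exfalso. apply Hx. exists (fun _ => x). split; auto. intros i j Hij Hj; lia.
  - destruct (classic (maximal M x)) as [Hm|Hm].
    + exists x; split; [apply Hr|auto].
    + unfold maximal in Hm. apply not_all_ex_not in Hm. destruct Hm as [t Htt].
      apply imply_to_and in Htt. destruct Htt as [Hxt Hne].
      destruct (IHk t) as [m [Htm Hm]].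
      { intros [f [Hf0 Hc]]. apply Hx. eexists; split;
        [|apply (chain_prepend M HM x t f k Hxt Hne Hf0 Hc)]. reflexivity. }
      exists m; split; auto. eapply Ht; eauto.
Qed.

Definition Vof M (T: form->Prop) (x : W M) : nat*bool -> nat -> Prop :=
  fun jb p => if snd jb then T (nexti (fst jb) (Atom p)) else val M (iter (fst jb) (succ M) x) p.
Definition Zof M (T: form->Prop) (x : W M) : nat*bool -> W M -> Prop :=
  fun jb y => if snd jb then (le M (iter (fst jb) (succ M) x) y /\
     forall i p, T (nexti (i + fst jb) (Atom p)) -> val M (iter i (succ M) y) p)
   else y = iter (fst jb) (succ M) x.

Lemma core M G T (HM : persistent_model M) w x : Sig M G T w -> le M w x ->
  (forall t, le M x t -> t <> x -> full M T t) -> (exists t, le M x t /\ full M T t) ->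
  exists V, tht_val V /\ forall a, sat (THTM V) (0,false) a <-> sat M x a.
Proof.
  intros HSg Hwx H1t H2t.
  pose proof (Sig_ub M G T HM w x HSg Hwx) as Hub.
  pose proof HM as (Hr&Ht&Ha&Hf&Hb&Hv).
  exists (Vof M T x). split.
  { intros [j b] [j' b'] p [E Hle] H; simpl in *. subst j'. unfold Vof in *; simpl in *.
    destruct b, b'; simpl in *; try discriminate; try assumption.
    exact (Hub j _ p (Hr _) H). }
  intros a. apply (bisim (THTM (Vof M T x)) M (Zof M T x)).
  - intros [j b] y p HZ. unfold Zof, Vof in *; simpl in *. destruct b.
    + destruct HZ as [H1 H2]. split; intro H.
      * specialize (H2 0 p). simpl in H2. apply H2; exact H.
      * exact (Hub j y p H1 H).
    + subst y. tauto.
  - intros [j b] y HZ. unfold Zof in *; simpl in *. destruct b.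
    + destruct HZ as [H1 H2]. split.
      * apply Hf; auto.
      * intros i p HT. rewrite iter_shift. specialize (H2 (S i) p). simpl in H2.
        apply H2. replace (i + S j) with (S (i + j)) in HT by lia. exact HT.
    + subst y. reflexivity.
  - intros [j b] y [j' b'] HZ [E Hle]. simpl in E, Hle. subst j'.
    destruct b, b'; simpl in Hle; try discriminate.
    + exists y; split; [apply Hr| exact HZ].
    + destruct H2t as [t [Hxt Hft]]. exists (iter j (succ M) t).
      unfold Zof in HZ; simpl in HZ; subst y. split.
      * apply fwd_iter; auto.
      * unfold Zof; simpl. split. apply fwd_iter; auto.
        intros i p HT. rewrite iter_add. apply Hft; exact HT.
    + exists y; split; [apply Hr | exact HZ].
  - intros [j b] y y' HZ Hyy'. unfold Zof in HZ; simpl in HZ. destruct b.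
    + destruct HZ as [H1 H2]. exists (j,true). split. split; reflexivity.
      unfold Zof; simpl. split. eapply Ht; eauto.
      intros i p HT. apply (Hv (iter i (succ M) y)). apply fwd_iter; auto. apply H2; auto.
    + subst y. destruct (classic (y' = iter j (succ M) x)) as [E|E].
      * exists (j,false). split. split; reflexivity. unfold Zof; simpl; exact E.
      * destruct (bwd_iter M HM j x y' Hyy') as [t [Hxt Et]]. exists (j,true).
        split. split; reflexivity. unfold Zof; simpl. split. exact Hyy'.
        intros i p HT. rewrite <- Et, iter_add. apply (H1t t Hxt).
        -- intro E'; apply E; rewrite <- Et, E'; reflexivity.
        -- exact HT.
  - unfold Zof; simpl; reflexivity.
Qed.

Lemma nochain M n x : depth_le M n -> ~ (exists f, f 0 = x /\ chain M f n).
Proof. intros HD [f [_ Hc]]; apply HD; exists f; exact Hc. Qed.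

Lemma dir n X Y G T : 2 <= n -> incl X THT -> incl Y THT ->
  temporal_safe_belief_set n X G T -> temporal_safe_belief_set n Y G T.
Proof.
  intros Hn HX HY [HP [Hcons Hent]]. split; [exact HP|split].
  - destruct Hcons as [M [HXM [w Hw]]]. destruct (Xmodel_pd n X M Hn HXM) as [HM HD].
    pose proof HM as (Hr&Ht&_).
    destruct (exists_max M HM n w (nochain M n w HD)) as [m [Hwm Hm]].
    destruct (core M G T HM w m Hw Hwm) as [V [HV Heq]].
    + intros t Htt Hne; exfalso; apply Hne; apply Hm; auto.
    + exists m; split; [apply Hr| apply (max_full M G T HM w m Hw Hwm Hm)].
    + exists (THTM V). split. apply tht_Xmodel; auto. exists (0,false).
      intros g Hg. apply Heq. apply (Sig_mono M G T HM w m Hwm Hw g Hg).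
  - intros M HYM w Hw d Hd. destruct (Xmodel_pd n Y M Hn HYM) as [HM HD].
    pose proof HM as (Hr&Ht&_).
    assert (Hfull: forall k x, le M w x -> ~ (exists f, f 0 = x /\ chain M f k) -> full M T x).
    { induction k; intros x Hwx Hx.
      - exfalso; apply Hx; exists (fun _ => x); split; auto; intros i j ? ?; lia.
      - destruct (classic (maximal M x)) as [Hm|Hm].
        + apply (max_full M G T HM w x Hw Hwx Hm).
        + assert (H1: forall t, le M x t -> t <> x -> full M T t).
          { intros t Hxt Hne. apply IHk. eapply Ht; eauto.
            intros [f [Hf0 Hc]]. apply Hx. eexists; split;
            [|apply (chain_prepend M HM x t f k Hxt Hne Hf0 Hc)]; reflexivity. }
          unfold maximal in Hm. apply not_all_ex_not in Hm. destruct Hm as [t Htt].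
          apply imply_to_and in Htt. destruct Htt as [Hxt Hne].
          destruct (core M G T HM w x Hw Hwx H1 (ex_intro _ t (conj Hxt (H1 t Hxt Hne))))
            as [V [HV Heq]].
          intros i p HT.
          assert (Hs: Sig (THTM V) G T (0,false)).
          { intros g Hg. apply Heq. apply (Sig_mono M G T HM w x Hwx Hw g Hg). }
          pose proof (Hent (THTM V) (tht_Xmodel n X V Hn HX HV) (0,false) Hs
                        (nexti i (Atom p)) HT) as H.
          apply Heq in H. apply sat_nexti in H. exact H. }
    destruct (HP d Hd) as [i [p E]]. subst d. apply sat_nexti. simpl.
    apply (Hfull n w (Hr w) (nochain M n w HD)). exact Hd.
Qed.

Theorem theorem5p6 :
  forall (n : nat), 1 <= n ->
  forall X Y : form -> Prop,
    intermediate_logic X -> intermediate_logic Y ->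
    incl (ITL_BD n) X -> incl X THT ->
    incl (ITL_BD n) Y -> incl Y THT ->
    forall (G T : form -> Prop), incl T Pcirc ->
      (temporal_safe_belief_set n X G T <-> temporal_safe_belief_set n Y G T).
Proof.
  intros n Hn X Y HXi HYi HnX HXT HnY HYT G T HP.
  assert (Hn2: 2 <= n).
  { destruct (Nat.eq_dec n 1) as [E|E]; [|lia]. subst. exfalso. apply not_BD1_THT.
    intros a Ha. apply HXT, HnX, Ha. }
  split; apply dir; auto.
Qed.
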